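(* Let $n\in\mathbb{N}$ and $i\in\mathbb{N}$ with $2\le i\le2^n$. Then there exists a maximal lattice-free polyhedron in $\mathbb{R}^n$ with exactly $i$ facets.
   Context: A set $B\subseteq\mathbb{R}^n$ is lattice-free if it is an $n$-dimensional closed convex set with $\operatorname{int}(B)\cap\mathbb{Z}^n=\emptyset$; it is maximal lattice-free if it is not a proper subset of another lattice-free set. *)

(* Defs.v *)
From HB Require Import structures.
From mathcomp Require Import all_boot all_order all_algebra.
From mathcomp Require Import all_classical all_reals all_analysis.
Set Implicit Arguments. Unset Strict Implicit. Unset Printing Implicit Defensive.
Import Order.TTheory GRing.Theory Num.Theory.
Import numFieldNormedType.Exports.
Local Open Scope classical_set_scope.
Local Open Scope ring_scope.

Section LatticeFree.
Variables (R : realType) (n : nat).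
Implicit Types (B S F : set 'rV[R]_n) (x y c : 'rV[R]_n).

Definition dotv (c x : 'rV[R]_n) : R := \sum_(j < n) c 0 j * x 0 j.

Definition lattice_point x : Prop := forall j : 'I_n, x 0 j \is a Num.int.

Definition convex_set B : Prop :=
  forall x y (t : R), B x -> B y -> 0 <= t <= 1 -> B (t *: x + (1 - t) *: y).

(* S contains k+1 affinely independent points x0, x0 + row 0 M, ..., x0 + row (k-1) M *)
Definition aff_indep_pts S (k : nat) : Prop :=
  exists x0, S x0 /\ exists M : 'M[R]_(k, n),
    (forall r : 'I_k, S (x0 + row r M)) /\ \rank M = k.

Definition affdim_eq S (d : nat) : Prop :=
  aff_indep_pts S d /\ ~ aff_indep_pts S d.+1.

Definition lattice_free B : Prop :=
  affdim_eq B n /\ closed B /\ convex_set B /\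
  (forall x, (B°) x -> ~ lattice_point x).

Definition maximal_lattice_free B : Prop :=
  lattice_free B /\
  (forall B', lattice_free B' -> B `<=` B' -> B = B').

Definition polyhedron B : Prop :=
  exists (m : nat) (a : 'I_m -> 'rV[R]_n) (b : 'I_m -> R),
    B = [set x | forall k, dotv (a k) x <= b k].

Definition face B F : Prop :=
  (exists x, F x) /\
  exists c (delta : R), (forall x, B x -> dotv c x <= delta) /\
    F = [set x | B x /\ dotv c x = delta].

Definition facet B F : Prop := face B F /\ affdim_eq F n.-1.

Definition num_facets_eq B (i : nat) : Prop :=
  exists fs : 'I_i -> set 'rV[R]_n,
    injective fs /\ (forall k, facet B (fs k)) /\
    (forall F, facet B F -> exists k, F = fs k).

End LatticeFree.

(* Main.v *)
Require Import Defs.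
From HB Require Import structures.
From mathcomp Require Import all_boot all_order all_algebra.
From mathcomp Require Import all_classical all_reals all_analysis.
From mathcomp Require Import lra zify.
Set Implicit Arguments. Unset Strict Implicit. Unset Printing Implicit Defensive.
Import Order.TTheory GRing.Theory Num.Theory.
Import numFieldNormedType.Exports.
Local Open Scope classical_set_scope.
Local Open Scope ring_scope.

Definition matchb n (v : {ffun 'I_n -> bool}) (p : 'I_n -> option bool) : bool :=
  [forall j, if p j is Some b then v j == b else true].

Definition setp n (p : 'I_n -> option bool) (j0 : 'I_n) (b : bool) :=
  fun j => if j == j0 then Some b else p j.

Lemma matchb_setp n (v : {ffun 'I_n -> bool}) p j0 b : p j0 = None ->
  matchb v (setp p j0 b) = (v j0 == b) && matchb v p.
Proof.
move=> pj0; apply/idP/idP.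
- move/forallP=> H; apply/andP; split.
    by have := H j0; rewrite /setp eqxx.
  apply/forallP => j; have := H j; rewrite /setp.
  by case: eqP => [->|//]; rewrite pj0.
- case/andP=> /eqP vj0 /forallP H; apply/forallP => j; rewrite /setp.
  by case: eqP => [->|_]; [rewrite vj0 | exact: H].
Qed.

Lemma matchb_split n (v : {ffun 'I_n -> bool}) p j0 : p j0 = None ->
  (matchb v (setp p j0 true) + matchb v (setp p j0 false) = matchb v p)%N.
Proof.
by move=> pj0; rewrite !matchb_setp //; case: (v j0); case: (matchb v p).
Qed.

Definition comb_ok n i (f : nat -> 'I_n -> option bool) :=
  (forall k, (k < i)%N -> exists j, f k j != None) /\
  (forall v : {ffun 'I_n -> bool}, (\sum_(k < i) matchb v (f k))%N = 1%N).

Lemma comb n i : (2 <= i)%N -> (i <= 2 ^ n)%N ->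
  exists f : nat -> 'I_n -> option bool, comb_ok i f.
Proof.
elim: i => [//|i IH] Hi Hin.
case: n Hin IH => [|n'] Hin IH; first by rewrite expn0 ltnS leqn0 in Hin; rewrite (eqP Hin) in Hi.
have [i1|i1] := eqVneq i 1%N.
  subst i.
  exists (fun k (j : 'I_n'.+1) => if j == ord0 then Some (k == 0)%N else None).
  split.
    by move=> k _; exists ord0; rewrite eqxx.
  move=> v; rewrite big_ord_recr big_ord1 /=.
  have E : forall b, matchb v (fun j => if j == ord0 then Some b else None) = (v ord0 == b).
    move=> b; apply/forallP/idP.
      by move=> /(_ ord0); rewrite eqxx.
    by move=> /eqP vb j; case: eqP => [->|]; rewrite ?vb.
  by rewrite !E; case: (v ord0).
have Hi2 : (2 <= i)%N by move: Hi i1; clear; case: i => [|[|]].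
have [f [fnz fsum]] := IH Hi2 (ltnW Hin).
have [k0 [j0 [k0i fk0j0]]] : exists k0 j0, (k0 < i)%N /\ f k0 j0 = None.
  apply: contrapT => Hno.
  have full : forall (k : 'I_i) j, f k j != None.
    move=> k j; apply/eqP => E; apply: Hno; exists (nat_of_ord k), j; split => //.
  have ex : forall v : {ffun 'I_n'.+1 -> bool}, exists k : 'I_i, matchb v (f k).
    move=> v; apply: contrapT => H; move: (fsum v); rewrite big1 // => k _.
    by apply/eqP; rewrite eqb0; apply/negP => M; apply: H; exists k.
  have [phi Hphi] := fin_all_exists ex.
  have inj : injective phi.
    move=> v w E; apply/ffunP => j.
    have := forallP (Hphi v) j; have := forallP (Hphi w) j; rewrite E.
    by case: (f _ j) (full (phi w) j) => // b _ /eqP -> /eqP ->.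
  have := leq_card phi inj; rewrite card_ffun card_bool !card_ord => H.
  by have := leq_ltn_trans H Hin; rewrite ltnn.
pose g k := if k == i then setp (f k0) j0 false
            else if k == k0 then setp (f k0) j0 true else f k.
exists g; split.
  move=> k kl; rewrite /g; case: eqP => [_|ki]; first by exists j0; rewrite /setp eqxx.
  case: eqP => _; first by exists j0; rewrite /setp eqxx.
  by apply: fnz; rewrite ltnS leq_eqVlt in kl; case/orP: kl => // /eqP.
move=> v; rewrite big_ord_recr /= {1 2}/g eqxx.
pose k0' := Ordinal k0i.
rewrite (bigD1 k0') //= (ltn_eqF k0i) eqxx.
have := fsum v; rewrite (bigD1 k0') //= => E.
rewrite -(matchb_split v fk0j0) in E.
rewrite -E -!addnA; congr (_ + _)%N; rewrite addnC; congr (_ + _)%N.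
apply: eq_bigr => k kk0; rewrite (ltn_eqF (ltn_ord k)).
by rewrite ifN //; apply: contra kk0 => /eqP E'; apply/eqP/val_inj.
Qed.

Section Dot.
Variables (R : realType) (n : nat).
Implicit Types (a x y : 'rV[R]_n).

Lemma dotvD a x y : dotv a (x + y) = dotv a x + dotv a y.
Proof. by rewrite /dotv -big_split /=; apply: eq_bigr => j _; rewrite mxE mulrDr. Qed.

Lemma dotvZ a t x : dotv a (t *: x) = t * dotv a x.
Proof. by rewrite /dotv mulr_sumr; apply: eq_bigr => j _; rewrite mxE mulrCA. Qed.

Lemma dotvN a x : dotv a (- x) = - dotv a x.
Proof. by rewrite -scaleN1r dotvZ mulN1r. Qed.

Lemma dotvB a x y : dotv a (x - y) = dotv a x - dotv a y.
Proof. by rewrite dotvD dotvN. Qed.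

Lemma dotv0 x : dotv 0 x = 0.
Proof. by rewrite /dotv big1 // => j _; rewrite mxE mul0r. Qed.

Lemma dotv_sum a I (r : seq I) (P : pred I) (F : I -> 'rV[R]_n) :
  dotv a (\sum_(k <- r | P k) F k) = \sum_(k <- r | P k) dotv a (F k).
Proof.
elim/big_rec2: _ => [|k y1 y2 _ <-]; first by rewrite /dotv big1 // => j _; rewrite mxE mulr0.
by rewrite dotvD.
Qed.

Lemma dotv_mul m (M : 'M[R]_(m, n)) a r : (M *m a^T) r 0 = dotv a (row r M).
Proof. by rewrite mxE /dotv; apply: eq_bigr => j _; rewrite !mxE mulrC. Qed.

Lemma dotv_cont a : continuous (dotv a).
Proof.
have H : forall s : seq 'I_n, continuous (fun x : 'rV[R]_n => \sum_(j <- s) a 0 j * x 0 j).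
  elim=> [|j s IH].
    by under eq_fun do rewrite big_nil; exact: cst_continuous.
  under eq_fun do rewrite big_cons.
  move=> x.
  have H1 : {for x, continuous (fun y : 'rV[R]_n => a 0 j * y 0 j)}.
    apply: (@continuousM R _ (fun=> a 0 j) (fun y : 'rV[R]_n => y 0 j) x).
      exact: cst_continuous.
    exact: coord_continuous.
  apply: (@continuousD R R _ (fun y : 'rV[R]_n => a 0 j * y 0 j) (fun y => \sum_(j <- s) a 0 j * y 0 j) x H1 (IH x)).
exact: H.
Qed.

Lemma dotv_self_gt0 a : a != 0 -> 0 < dotv a a.
Proof.
move=> a0.
have [j aj] : exists j, a 0 j != 0.
  apply: contrapT => H; move/eqP: a0; apply; apply/rowP => j; rewrite mxE.
  by apply/eqP; apply: contrapT => /negP H'; apply: H; exists j.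
rewrite /dotv (bigD1 j) //=.
have h1 : 0 < a 0 j * a 0 j by rewrite lt0r mulf_neq0 //= -expr2 sqr_ge0.
apply: lt_le_trans h1 _; rewrite lerDl.
by apply: sumr_ge0 => k _; rewrite -expr2 sqr_ge0.
Qed.

Lemma no_aff_indep (S : set 'rV[R]_n) : ~ aff_indep_pts S n.+1.
Proof.
move=> [x0 [_ [M [_ rk]]]]; have := rank_leq_col M; rewrite rk ltnn //.
Qed.

End Dot.

Section Top.
Variables (R : realType) (n : nat).

Lemma near_strict m (a : 'I_m -> 'rV[R]_n) (beta : 'I_m -> R) p :
  (forall k, dotv (a k) p < beta k) ->
  \forall u \near p, forall k, dotv (a k) u < beta k.
Proof.
move=> H; apply: (@filter_forall _ _ (fun k u => dotv (a k) u < beta k) (nbhs p) _) => k.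
exact: (@dotv_cont R n (a k) p _ (lt_nbhsl (H k))).
Qed.

Lemma L_int (S : set 'rV[R]_n) p c (delta : R) :
  nbhs p S -> (forall x, S x -> dotv c x <= delta) -> dotv c p = delta ->
  c != 0 -> False.
Proof.
move=> Sp Sle cp c0.
pose g (t : R) := p + t *: c.
have gc : {for 0, continuous g}.
  apply: (@continuousD R _ _ (fun=> p) (fun t : R => t *: c) 0).
    exact: cst_continuous.
  apply: (@continuousZr_tmp R _ _ (fun t : R => t) c 0).
  exact: cvg_id.
have g0 : g 0 = p by rewrite /g scale0r addr0.
have : nbhs (g 0) S by rewrite g0.
move=> /gc /nbhs_ballP [e e0 He].
have : S (g (e / 2)).
  apply: He; rewrite /ball /= sub0r normrN ger0_norm ?divr_ge0 ?ltW //.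
  by rewrite ltr_pdivrMr // ltr_pMr // ltr1n.
move=> /Sle; rewrite /g dotvD dotvZ cp -[leRHS]addr0 lerD2l => H.
have : 0 < e / 2 * dotv c c by rewrite mulr_gt0 ?divr_gt0 ?dotv_self_gt0.
by rewrite ltNge H.
Qed.

End Top.

Section Geo.
Variables (R : realType) (n' i : nat) (f : nat -> 'I_n'.+1 -> option bool).
Hypothesis Hf : comb_ok i f.
Local Notation n := n'.+1.

Definition sg (o : option bool) : R :=
  if o is Some b then (if b then 1 else -1) else 0.
Definition A (k : nat) : 'rV[R]_n := \row_j sg (f k j).
Definition bb (k : nat) : R := \sum_j ((f k j == Some true)%:R).
Definition Bset : set 'rV[R]_n := [set x | forall k : 'I_i, dotv (A k) x <= bb k].
Definition zr (v : {ffun 'I_n -> bool}) : 'rV[R]_n := \row_j ((v j)%:R).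
Definition vof k : {ffun 'I_n -> bool} := [ffun j => f k j == Some true].
Definition zk k := zr (vof k).
Definition mism (o : option bool) (b : bool) : bool :=
  if o is Some b' then b != b' else false.

Lemma sg_le1 o : `|sg o| <= 1.
Proof. by case: o => [[]|] /=; rewrite ?normrN ?normr1 ?normr0. Qed.

Lemma A_neq0 k : (k < i)%N -> A k != 0.
Proof.
case: Hf => nz _ /nz [j fj]; apply/eqP => /rowP /(_ j); rewrite !mxE.
by case: (f k j) fj => [[]|] //= _ /eqP; rewrite ?oppr_eq0 oner_eq0.
Qed.

Lemma dot_zr k v :
  dotv (A k) (zr v) = bb k - \sum_j ((mism (f k j) (v j))%:R).
Proof.
rewrite /dotv /bb -sumrB; apply: eq_bigr => j _; rewrite !mxE.
by case: (f k j) => [[]|]; case: (v j) => /=; rewrite ?mulr1n ?mulr0n; lra.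
Qed.

Lemma mism_match k v : matchb v (f k) = ~~ [exists j, mism (f k j) (v j)].
Proof.
rewrite negb_exists; apply: eq_forallb => j.
by case: (f k j) => [b|] //=; rewrite negbK.
Qed.

Lemma dot_zr_match k v : matchb v (f k) -> dotv (A k) (zr v) = bb k.
Proof.
rewrite mism_match negb_exists => /forallP H.
by rewrite dot_zr big1 ?subr0 // => j _; rewrite (negbTE (H j)).
Qed.

Lemma dot_zr_nomatch k v : ~~ matchb v (f k) -> dotv (A k) (zr v) <= bb k - 1.
Proof.
rewrite mism_match negbK => /existsP [j Hj].
rewrite dot_zr lerD2l lerN2 (bigD1 j) //= Hj lerDl.
by apply: sumr_ge0 => l _; rewrite ler0n.
Qed.

Lemma uniq_match v (k j : 'I_i) : matchb v (f k) -> matchb v (f j) -> k = j.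
Proof.
move=> mk mj; apply/eqP; apply: contraT => kj.
case: Hf => _ /(_ v); rewrite (bigD1 k) //= (bigD1 j) /=; last by rewrite eq_sym kj.
by rewrite mk mj => /eqP; rewrite !add1n.
Qed.

Lemma cover v : exists k : 'I_i, matchb v (f k).
Proof.
apply: contrapT => H; case: Hf => _ /(_ v); rewrite big1 // => k _.
by apply/eqP; rewrite eqb0; apply/negP => M; apply: H; exists k.
Qed.

Lemma vof_match k : matchb (vof k) (f k).
Proof.
by apply/forallP => j; rewrite ffunE; case: (f k j) => [[]|].
Qed.

Lemma zk_tight k : dotv (A k) (zk k) = bb k.
Proof. exact/dot_zr_match/vof_match. Qed.

Lemma zk_strict (k j : 'I_i) : j != k -> dotv (A j) (zk k) <= bb j - 1.
Proof.
move=> jk; apply: dot_zr_nomatch; apply: contra jk => M.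
by rewrite (uniq_match M (vof_match k)).
Qed.

Lemma zk_in (k : 'I_i) : Bset (zk k).
Proof.
move=> j; have [->|jk] := eqVneq j k; first by rewrite zk_tight.
by apply: le_trans (zk_strict jk) _; rewrite lerBlDr lerDl ler01.
Qed.

Lemma zk_lattice k : lattice_point (zk k).
Proof. by move=> j; rewrite mxE natr_int. Qed.

Definition rnd (x : 'rV[R]_n) : {ffun 'I_n -> bool} := [ffun j => 1 <= x 0 j].

Lemma int_lt1 (x : R) : x \is a Num.int -> x < 1 -> x <= 0.
Proof. by move=> /intrP [m ->]; rewrite ltrz1 lerz0 -[1%R]add0r ltzD1. Qed.

Lemma lattice_ge k x : lattice_point x -> matchb (rnd x) (f k) -> bb k <= dotv (A k) x.
Proof.
move=> lx /forallP M; rewrite /bb /dotv; apply: ler_sum => j _; rewrite mxE.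
have := M j; rewrite ffunE.
case: (f k j) => [[]|] /=; rewrite ?mulr1n ?mulr0n ?mul0r // => /eqP.
  by rewrite mul1r.
by move/negbT; rewrite -ltNge => /(int_lt1 (lx j)); rewrite mulN1r oppr_ge0.
Qed.


Definition c0 : 'rV[R]_n := \row_j (2^-1 : R).
Definition Mhalf : 'M[R]_n := 2^-1 *: 1%:M.
Definition supp k : R := \sum_j ((f k j != None)%:R).

Lemma supp_ge1 k : (k < i)%N -> 1 <= supp k.
Proof.
case: Hf => nz _ /nz [j fj]; rewrite /supp (bigD1 j) //= fj.
by rewrite lerDl; apply: sumr_ge0 => l _; rewrite ler0n.
Qed.

Lemma dot_c0 k : dotv (A k) c0 = bb k - 2^-1 * supp k.
Proof.
rewrite /dotv /bb /supp mulr_sumr -sumrB; apply: eq_bigr => j _; rewrite !mxE.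
by case: (f k j) => [[]|] /=; rewrite ?mulr1n ?mulr0n; lra.
Qed.

Lemma dot_row_Mhalf k r : dotv (A k) (row r Mhalf) = sg (f k r) * 2^-1.
Proof.
rewrite /dotv /Mhalf (bigD1 r) //= big1 ?addr0; first by rewrite !mxE eqxx mulr1n mulr1.
by move=> j jr; rewrite !mxE eq_sym (negbTE jr) mulr0 mulr0.
Qed.

Lemma c0_strict (k : 'I_i) : dotv (A k) c0 < bb k.
Proof.
rewrite dot_c0; have := supp_ge1 (ltn_ord k); lra.
Qed.

Lemma c0_row_in r : Bset (c0 + row r Mhalf).
Proof.
move=> k; rewrite dotvD dot_c0 dot_row_Mhalf.
have := supp_ge1 (ltn_ord k); have := sg_le1 (f k r).
move: (sg (f k r)) => s /ler_normlP [_ h1]; lra.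
Qed.

Lemma affB : aff_indep_pts Bset n.
Proof.
exists c0; split.
  by move=> k; apply: ltW; apply: c0_strict.
exists Mhalf; split; first exact: c0_row_in.
by rewrite /Mhalf mxrank_scale_nz ?mxrank1 // invr_eq0 pnatr_eq0.
Qed.

Lemma closedB : closed Bset.
Proof.
have -> : Bset = \bigcap_(k in [set: 'I_i]) (dotv (A k) @^-1` [set r | r <= bb k]).
  by apply/seteqP; split => x /= H k; [move=> _; exact: H | exact: H].
apply: closed_bigI => k _; apply: preimage_closed; last exact: closed_le.
by move=> x _; apply: dotv_cont.
Qed.

Lemma convexB : Defs.convex_set Bset.
Proof.
move=> x y t Bx By /andP [t0 t1] k; rewrite dotvD !dotvZ.
have t1' : 0 <= 1 - t by rewrite subr_ge0.
have h1 := ler_wpM2l t0 (Bx k); have h2 := ler_wpM2l t1' (By k).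
by move: h1 h2; lra.
Qed.

Lemma interiorB x : (Bset°) x -> ~ lattice_point x.
Proof.
move=> nx lx; have Bx := nbhs_singleton nx.
have [k mk] := cover (rnd x).
have ge := lattice_ge lx mk.
apply: (L_int (c := A k) (delta := bb k) nx).
- by move=> y; apply.
- by apply/eqP; rewrite eq_le ge (Bx k).
- exact: A_neq0.
Qed.

Lemma lfB : lattice_free Bset.
Proof.
split; last split; [|exact: closedB|split; [exact: convexB|exact: interiorB]].
by split; [exact: affB|exact: no_aff_indep].
Qed.

Lemma maxB (B' : set 'rV[R]_n) : lattice_free B' -> Bset `<=` B' -> Bset = B'.
Proof.
move=> [_ [_ [cvx lf]]] sub; apply/seteqP; split => // y B'y.
apply: contrapT => nBy.
have [k hk] : exists k : 'I_i, bb k < dotv (A k) y.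
  apply: contrapT => H; apply: nBy => k; rewrite leNgt; apply/negP => h.
  by apply: H; exists k.
pose z := zk k.
pose Sig := \sum_(j < i) `|dotv (A j) (z - y)|.
have Sig0 : 0 <= Sig by apply: sumr_ge0 => j _.
pose eps := (2 * (1 + Sig))^-1.
have eps0 : 0 < eps by rewrite invr_gt0 mulr_gt0 // ltr_pwDl.
have epsS : eps * Sig <= 2^-1.
  have -> : 2^-1 = eps * (1 + Sig) by rewrite /eps invfM -mulrA mulVf ?mulr1 // gt_eqF // ltr_pwDl.
  by apply: ler_wpM2l; [exact: ltW | rewrite lerDr ler01].
have e1 : 0 < 1 + eps by lra.
pose beta (j : 'I_i) := (bb j + eps * dotv (A j) y) / (1 + eps).
have strict : forall j : 'I_i, dotv (A j) z < beta j.
  move=> j; rewrite ltr_pdivlMr // mulrDr mulr1.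
  have [->|jk] := eqVneq j k.
    have h : eps * bb k < eps * dotv (A k) y by rewrite ltr_pM2l.
    rewrite /z zk_tight mulrC; lra.
  have h1 := zk_strict jk; rewrite -/z in h1.
  have h2 : `|dotv (A j) (z - y)| <= Sig.
    by rewrite /Sig (bigD1 j) //= lerDl; apply: sumr_ge0.
  have h3 : eps * (dotv (A j) z - dotv (A j) y) <= 2^-1.
    apply: le_trans epsS; apply: ler_wpM2l; first exact: ltW.
    by apply: le_trans h2; rewrite -dotvB ler_norm.
  move: h3; rewrite mulrBr mulrC; lra.
have N := near_strict strict.
have intz : (B'°) z.
  apply: filterS N => u Hu.
  pose w := (1 + eps) *: u - eps *: y.
  have Bw : Bset w.
    move=> j; rewrite /w dotvB !dotvZ.
    have := Hu j; rewrite ltr_pdivlMr // mulrC => h; lra.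
  pose t := (1 + eps)^-1.
  have t01 : 0 <= t <= 1.
    rewrite invr_ge0 ltW //= invr_le1 ?ltW // ?unitfE ?gt_eqF //.
    by lra.
  have := cvx w y t (sub _ Bw) B'y t01.
  have ht : t * (1 + eps) = 1 by rewrite mulVf // gt_eqF.
  have -> : t *: w + (1 - t) *: y = u; last by [].
  rewrite /w scalerBr !scalerA ht scale1r -addrA -scaleNr -scalerDl.
  have -> : - (t * eps) + (1 - t) = 0 by move: ht; rewrite mulrDr mulr1; lra.
  by rewrite scale0r addr0.
exact: (lf z intz (zk_lattice k)).
Qed.

Definition Fk (k : nat) : set 'rV[R]_n := [set x | Bset x /\ dotv (A k) x = bb k].

Definition ev (q : 'I_n) : 'rV[R]_n := \row_l ((l == q)%:R).

Lemma dot_ev a q : dotv a (ev q) = a 0 q.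
Proof.
rewrite /dotv (bigD1 q) //= big1 ?addr0; first by rewrite mxE eqxx mulr1.
by move=> l lq; rewrite mxE (negbTE lq) mulr0.
Qed.

Lemma orth_mul m (M : 'M[R]_(m, n)) a :
  (forall r, dotv a (row r M) = 0) -> M *m a^T = 0.
Proof. by move=> H; apply/matrixP => r c; rewrite (ord1 c) dotv_mul H mxE. Qed.

Lemma orth_rank m (M : 'M[R]_(m, n)) (a : 'rV[R]_n) : a != 0 -> M *m a^T = 0 -> (\rank M <= n')%N.
Proof.
move=> a0 /mulmx0_rank_max; rewrite mxrank_tr.
have : (0 < \rank a)%N by rewrite lt0n mxrank_eq0.
move: (\rank M) (\rank a) => x y; lia.
Qed.

Lemma aff_sub (S T : set 'rV[R]_n) d : S `<=` T -> aff_indep_pts S d -> aff_indep_pts T d.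
Proof.
move=> ST [x0 [Sx0 [M [HM rk]]]]; exists x0; split; first exact: ST.
by exists M; split => // r; apply: ST.
Qed.

Lemma sg_sq o : o != None -> sg o * sg o = 1.
Proof. by case: o => [[]|] //= _; rewrite ?mulr1 ?mulrNN ?mulr1. Qed.

Lemma Fk_aff (k : 'I_i) : aff_indep_pts (Fk k) n'.
Proof.
have [piv fp] : exists piv, f k piv != None by case: Hf => nz _; apply: nz.
pose s := sg (f k piv).
pose d (r : 'I_n') := 2^-1 *: (ev (lift piv r) - (sg (f k (lift piv r)) * s) *: ev piv).
pose M := \matrix_r d r.
exists (zk k); split; first by split; [exact: zk_in | exact: zk_tight].
exists M; split.
  move=> r; rewrite rowK.
  have dd : forall j, dotv (A j) (d r) =
      2^-1 * (A j 0 (lift piv r) - sg (f k (lift piv r)) * s * A j 0 piv).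
    by move=> j; rewrite /d dotvZ dotvB dotvZ !dot_ev.
  have dk : dotv (A k) (d r) = 0.
    rewrite dd !mxE -mulrA (mulrC s) /s sg_sq // mulr1 subrr mulr0 //.
  split; last by rewrite dotvD zk_tight dk addr0.
  move=> j; rewrite dotvD; have [->|jk] := eqVneq j k.
    by rewrite zk_tight dk addr0.
  have h1 := zk_strict jk.
  rewrite dd; set u := A j 0 (lift piv r); set w := sg (f k (lift piv r)) * s * A j 0 piv.
  have hu : `|u| <= 1 by rewrite /u mxE sg_le1.
  have hw : `|w| <= 1.
    rewrite /w !normrM /s mxE.
    apply: mulr_ile1; rewrite ?mulr_ge0 ?normr_ge0 ?sg_le1 //.
    by apply: mulr_ile1; rewrite ?normr_ge0 ?sg_le1.
  move: hu hw => /ler_normlP [_ hu] /ler_normlP [hw _]; lra.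
apply/eqP; rewrite eqn_leq rank_leq_row /=.
pose P : 'M[R]_(n, n') := \matrix_(j, r) ((j == lift piv r)%:R).
have MP : M *m P = 2^-1 *: 1%:M.
  apply/matrixP => r r'; rewrite !mxE (bigD1 (lift piv r')) //= big1 ?addr0.
    rewrite /M /P !mxE eqxx mulr1 (inj_eq lift_inj) [lift piv r' == piv]eq_sym.
    by rewrite (negbTE (neq_lift _ _)) mulr0 subr0 eq_sym.
  by move=> j jl; rewrite /P !mxE (negbTE jl) mulr0.
have := mxrankM_maxl M P; rewrite MP mxrank_scale_nz ?mxrank1 //.
Qed.

Lemma Fk_facet (k : 'I_i) : facet Bset (Fk k).
Proof.
split.
  split; first by exists (zk k); split; [exact: zk_in | exact: zk_tight].
  by exists (A k), (bb k); split => // x Bx; exact: Bx k.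
split; first exact: Fk_aff.
move=> [x0 [[_ Fx0] [M [HM rk]]]].
have orth : forall r, dotv (A k) (row r M) = 0.
  by move=> r; have [_] := HM r; rewrite dotvD Fx0 -[RHS]addr0 => /addrI.
by have := orth_rank (A_neq0 (ltn_ord k)) (orth_mul orth); rewrite rk ltnn.
Qed.

Lemma Fk_inj : injective (fun k : 'I_i => Fk k).
Proof.
move=> j k /= E; apply/eqP; apply: contraT => jk.
have : Fk j (zk k) by rewrite E; split; [exact: zk_in | exact: zk_tight].
case=> _ h; have := zk_strict jk; rewrite h; lra.
Qed.

Lemma facet_Fk (F : set 'rV[R]_n) : facet Bset F -> exists k : 'I_i, F = Fk k.
Proof.
move=> [[[x1 Fx1] [c [del [Hle EF]]]] [affF naffF]].
have ipos : (0 < i)%N.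
  by have [k0 _] := cover [ffun _ => true]; exact: (leq_ltn_trans (leq0n _) (ltn_ord k0)).
have FB : forall x, F x -> Bset x /\ dotv c x = del by move=> x; rewrite EF.
have [k Hk] : exists k : 'I_i, F `<=` Fk k.
  apply: contrapT => H.
  have ex : forall k : 'I_i, exists p, F p /\ dotv (A k) p < bb k.
    move=> k; apply: contrapT => H2; apply: H; exists k => x Fx.
    have [Bx _] := FB x Fx.
    split => //; apply/eqP; rewrite eq_le (Bx k) /= leNgt; apply/negP => lt.
    by apply: H2; exists x.
  have [p Hp] := choice ex.
  pose pa := (i%:R^-1 : R) *: \sum_(k < i) p k.
  have i0 : (i%:R : R) != 0 by rewrite pnatr_eq0 -lt0n.
  have strict : forall j : 'I_i, dotv (A j) pa < bb j.
    move=> j; rewrite /pa dotvZ dotv_sum mulrC ltr_pdivrMr ?ltr0n //.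
    have -> : bb j * i%:R = \sum_(k < i) bb j by rewrite sumr_const card_ord mulr_natr.
    rewrite (bigD1 j) //= [X in _ < X](bigD1 j) //=; apply: ltr_leD; first exact: (Hp j).2.
    by apply: ler_sum => k _; have [Bk _] := FB _ (Hp k).1; exact: Bk j.
  have cpa : dotv c pa = del.
    rewrite /pa dotvZ dotv_sum (eq_bigr (fun=> del)); last by move=> k _; have [_ ->] := FB _ (Hp k).1.
    by rewrite sumr_const card_ord -[del *+ i]mulr_natl mulKf.
  have npa : nbhs pa Bset.
    by apply: filterS (near_strict strict) => u Hu j; apply: ltW.
  have [c0|cn0] := eqVneq c 0.
    have d0 : del = 0 by rewrite -cpa c0 dotv0.
    apply: naffF; apply: (aff_sub _ affB) => x Bx; rewrite EF; split => //.
    by rewrite c0 dotv0 d0.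
  exact: (L_int npa Hle cpa cn0).
exists k; apply/seteqP; split => // q Fkq.
have [Bq tq] := Fkq.
rewrite EF; split => //.
apply: contrapT => cq.
have [x0 [Fx0 [M [HM rk]]]] := affF.
have [_ Ax0] := Hk _ Fx0.
have [_ cx0] := FB _ Fx0.
pose v := q - x0.
have oA : col_mx M v *m (A k)^T = 0.
  rewrite mul_col_mx.
  have -> : M *m (A k)^T = 0.
    apply: orth_mul => r; have [_] := Hk _ (HM r).
    by rewrite dotvD Ax0 -[RHS]addr0 => /addrI.
  have -> : v *m (A k)^T = 0.
    by apply: orth_mul => r; rewrite row_id /v dotvB tq Ax0 subrr.
  by rewrite col_mx0.
have r2 := orth_rank (A_neq0 (ltn_ord k)) oA.
have oc : M *m c^T = 0.
  apply: orth_mul => r; have [_] := FB _ (HM r).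
  by rewrite dotvD cx0 -[RHS]addr0 => /addrI.
have nsub : ~~ (v <= M)%MS.
  apply/negP => /submxP [D vD].
  have : (v *m c^T) 0 0 = 0 by rewrite vD -mulmxA oc mulmx0 mxE.
  rewrite dotv_mul row_id /v dotvB cx0 => /eqP; rewrite subr_eq0 => /eqP; exact: cq.
have lt := ltn_leqif (mxrank_leqif_sup (addsmxSl M v)).
rewrite addsmx_sub submx_refl /= (negbTE nsub) (addsmxE M v) rk in lt.
by move: (leq_trans lt r2); rewrite ltnn.
Qed.

End Geo.

Theorem lemma3p3 (R : realType) (n i : nat) :
  (2 <= i)%N -> (i <= 2 ^ n)%N ->
  exists B : set 'rV[R]_n,
    polyhedron B /\ maximal_lattice_free B /\ num_facets_eq B i.
Proof.
case: n => [|n'] Hi Hin.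
  by rewrite expn0 in Hin; have := leq_trans Hi Hin.
have [f Hf] := comb Hi Hin.
exists (@Bset R n' i f); split.
  by exists i, (fun k : 'I_i => @A R n' f k), (fun k : 'I_i => @bb R n' f k).
split; first by split; [exact: lfB Hf | exact: maxB Hf].
exists (fun k : 'I_i => @Fk R n' i f k); split; first exact: Fk_inj Hf.
by split; [exact: Fk_facet Hf | exact: facet_Fk Hf].
Qed.
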